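(* Let $2\le n_1<n_2$. Under exogenous participation and CRRA utility $u(w)=w^{1-\theta}/(1-\theta)$ with $\theta\in[0,1)$, the model structure $(F_0,D,\theta)$ is identified from the equilibrium bid distributions $G(\cdot\mid n_1)$ and $G(\cdot\mid n_2)$: any two such structures that induce the same pair $(G(\cdot\mid n_1),G(\cdot\mid n_2))$ coincide.
   Context: First-price auctions (no reserve price) with $n$ bidders, $n\in\{n_1,n_2\}$. Bidders' values are i.i.d. from $F_0$ on $[\underline v,\overline v]$ with continuous density $f_0>0$. Bidders have utility $u(w)=w^{1-\theta}/(1-\theta)$, $\theta\in[0,1)$, and maxmin expected utility over a weakly compact convex set $\Gamma$ of strictly increasing $C^1$ distributions on $[\underline v,\overline v]$ containing $F_0$, with least element $F^*\in\Gamma$ ($F^*\le F$ pointwise for all $F\in\Gamma$) having density $f^*>0$. Define $D(\gamma)=F^*(F_0^{-1}(\gamma))$ on $[0,1]$ ($D$ strictly increasing, $C^1$, $D(0)=0$, $D(1)=1$, $D(\gamma)\le\gamma$, $D'(0)>0$). Exogenous participation: $F_0$ and $\Gamma$ (hence $D$) do not depend on $n$. For $n$ bidders, a symmetric equilibrium is a strictly increasing differentiable $\beta_n$ such that for every value $v$, $x=v$ maximizes $u[v-\beta_n(x)]D[F_0(x)]^{n-1}$; $G(\cdot\mid n)$ is the distribution of $\beta_n(v)$ for $v\sim F_0$, with density $g(\cdot\mid n)$. *)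

(* Defs.v *)
From Stdlib Require Import Reals Lra.
Open Scope R_scope.

Definition deriv_on (a b : R) (f f' : R -> R) : Prop :=
  forall x, a <= x <= b ->
    limit1_in (fun y => (f y - f x) / (y - x))
              (fun y => a <= y <= b /\ y <> x) (f' x) x.

Definition cont_on (a b : R) (g : R -> R) : Prop :=
  forall x, a <= x <= b -> limit1_in g (fun y => a <= y <= b) (g x) x.

Definition C1_on (a b : R) (f f' : R -> R) : Prop :=
  deriv_on a b f f' /\ cont_on a b f'.

Definition strict_incr_on (a b : R) (f : R -> R) : Prop :=
  forall x y, a <= x <= b -> a <= y <= b -> x < y -> f x < f y.

Definition value_cdf (vl vh : R) (F0 : R -> R) : Prop :=
  vl < vh /\
  (forall x, x <= vl -> F0 x = 0) /\
  (forall x, vh <= x -> F0 x = 1) /\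
  strict_incr_on vl vh F0 /\
  exists f0, C1_on vl vh F0 f0 /\ (forall x, vl <= x <= vh -> 0 < f0 x).

(* D(gamma) = F*(F0^{-1}(gamma)) on [0,1]: strictly increasing, C^1, D(0)=0,
   D(1)=1, D(gamma) <= gamma, D'(0) > 0.  Since the least element F* has a
   density f* = D'(F0) f0 > 0, also D' > 0 on [0,1]. *)
Definition ambiguity_D (D : R -> R) : Prop :=
  strict_incr_on 0 1 D /\ D 0 = 0 /\ D 1 = 1 /\
  (forall g, 0 <= g <= 1 -> D g <= g) /\
  exists D', C1_on 0 1 D D' /\ 0 < D' 0 /\ (forall g, 0 <= g <= 1 -> 0 < D' g).

(* CRRA utility u(w) = w^(1-theta)/(1-theta); for w < 0 (overbidding) we use
   the odd extension -(-w)^(1-theta)/(1-theta) (equal to w when theta = 0). *)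
Definition crra (theta w : R) : R :=
  if Rlt_dec 0 w then Rpower w (1 - theta) / (1 - theta)
  else if Rlt_dec w 0 then - (Rpower (- w) (1 - theta) / (1 - theta))
  else 0.

Definition model_structure (vl vh : R) (F0 D : R -> R) (theta : R) : Prop :=
  value_cdf vl vh F0 /\ ambiguity_D D /\ 0 <= theta < 1.

Definition sym_equilibrium (n : nat) (vl vh : R) (F0 D : R -> R) (theta : R)
  (beta : R -> R) : Prop :=
  strict_incr_on vl vh beta /\
  (exists beta', deriv_on vl vh beta beta') /\
  forall v x, vl <= v <= vh -> vl <= x <= vh ->
    crra theta (v - beta x) * (D (F0 x)) ^ (n - 1)
      <= crra theta (v - beta v) * (D (F0 v)) ^ (n - 1).

(* G is the CDF of beta(V), V ~ F0 on [vl,vh]: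
   G b = P(beta V <= b).  For b below the lowest bid it is 0; if v in [vl,vh]
   is such that beta v <= b < beta w for all w in (v,vh], then
   {x | beta x <= b} = [vl,v] and G b = F0 v. *)
Definition bid_cdf (vl vh : R) (F0 beta G : R -> R) : Prop :=
  (forall b, b < beta vl -> G b = 0) /\
  (forall b v, vl <= v <= vh -> beta v <= b ->
     (forall w, v < w <= vh -> b < beta w) -> G b = F0 v).

(* Main.v *)
Require Import Defs.
From Stdlib Require Import Reals Lra Lia.
Open Scope R_scope.

Lemma lim_unf f D l x0 : limit1_in f D l x0 <->
  forall eps, eps > 0 -> exists alp, alp > 0 /\
    forall y, D y -> Rabs (y - x0) < alp -> Rabs (f y - l) < eps.
Proof.
  unfold limit1_in, limit_in; simpl; unfold R_dist; split.
  - intros H eps He; destruct (H eps He) as [alp [Ha Hb]]; exists alp; split; auto.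
  - intros H eps He; destruct (H eps He) as [alp [Ha Hb]]; exists alp; split; auto.
    intros y [Hy1 Hy2]; auto.
Qed.

Lemma deriv_interior a b f f' x : deriv_on a b f f' -> a < x < b ->
  derivable_pt_lim f x (f' x).
Proof.
  intros H Hx eps He.
  destruct (proj1 (lim_unf _ _ _ _) (H x ltac:(lra)) eps He) as [alp [Ha Hb]].
  assert (Hd : 0 < Rmin alp (Rmin (x - a) (b - x))).
  { repeat apply Rmin_pos; lra. }
  exists (mkposreal _ Hd); simpl; intros h Hh Hl.
  assert (H1 := Rmin_l alp (Rmin (x - a) (b - x))).
  assert (H2 := Rmin_l (x - a) (b - x)).
  assert (H3 := Rmin_r (x - a) (b - x)).
  assert (H4 := Rmin_r alp (Rmin (x - a) (b - x))).
  specialize (Hb (x + h)).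
  replace (x + h - x) with h in Hb by ring.
  apply Hb.
  - apply Rabs_def2 in Hl; split; [lra | lra].
  - lra.
Qed.

Lemma deriv_cont a b f f' : deriv_on a b f f' -> cont_on a b f.
Proof.
  intros H x Hx. apply lim_unf; intros eps He.
  destruct (proj1 (lim_unf _ _ _ _) (H x Hx) 1 ltac:(lra)) as [alp [Ha Hb]].
  set (M := 1 + Rabs (f' x)).
  assert (HM : 0 < M) by (unfold M; pose proof (Rabs_pos (f' x)); lra).
  exists (Rmin alp (eps / M)); split.
  { apply Rmin_pos; [lra| apply Rdiv_lt_0_compat; lra]. }
  intros y Hy Hl.
  destruct (Req_dec y x) as [->|Hne].
  { replace (f x - f x) with 0 by ring; rewrite Rabs_R0; lra. }
  assert (Hq := Hb y (conj Hy Hne) (Rlt_le_trans _ _ _ Hl (Rmin_l _ _))).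
  assert (Hyx : y - x <> 0) by lra.
  replace (f y - f x) with ((f y - f x) / (y - x) * (y - x)) by (field; auto).
  rewrite Rabs_mult.
  assert (Hq2 : Rabs ((f y - f x) / (y - x)) < M).
  { unfold M. pose proof (Rabs_triang_inv ((f y - f x) / (y - x)) (f' x)). lra. }
  assert (Hl2 : Rabs (y - x) < eps / M) by (eapply Rlt_le_trans; [exact Hl| apply Rmin_r]).
  apply Rle_lt_trans with (M * Rabs (y - x)).
  { apply Rmult_le_compat_r; [apply Rabs_pos| lra]. }
  apply Rlt_le_trans with (M * (eps / M)).
  { apply Rmult_lt_compat_l; lra. }
  right; field; lra.
Qed.

Definition clamp a b x := Rmax a (Rmin b x).

Lemma clamp_in a b x : a <= b -> a <= clamp a b x <= b.
Proof. intros; unfold clamp, Rmax, Rmin; repeat destruct Rle_dec; lra. Qed.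
Lemma clamp_id a b x : a <= x <= b -> clamp a b x = x.
Proof. intros; unfold clamp, Rmax, Rmin; repeat destruct Rle_dec; lra. Qed.
Lemma clamp_lip a b x y : a <= b -> Rabs (clamp a b y - clamp a b x) <= Rabs (y - x).
Proof.
  intros; unfold clamp, Rmax, Rmin; repeat destruct Rle_dec;
  unfold Rabs; repeat destruct Rcase_abs; lra.
Qed.

Lemma clamp_cont a b g : a <= b -> cont_on a b g -> continuity (fun x => g (clamp a b x)).
Proof.
  intros Hab H x. unfold continuity_pt, continue_in. apply lim_unf.
  intros eps He.
  destruct (proj1 (lim_unf _ _ _ _) (H (clamp a b x) (clamp_in a b x Hab)) eps He) as [alp [Ha Hb]].
  exists alp; split; auto. intros y _ Hy.
  apply Hb. apply clamp_in; auto.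
  eapply Rle_lt_trans; [apply clamp_lip; auto| auto].
Qed.

Lemma IVT' a b g x y t : cont_on a b g -> a <= x -> x <= y -> y <= b ->
  g x <= t -> t <= g y -> exists u, x <= u <= y /\ g u = t.
Proof.
  intros Hc Hax Hxy Hyb H1 H2.
  destruct (Req_dec (g x) t) as [E|E]. { exists x; split; [lra|auto]. }
  destruct (Req_dec (g y) t) as [E2|E2]. { exists y; split; [lra|auto]. }
  assert (Hxy' : x < y).
  { destruct (Req_dec x y) as [->|]; [lra|lra]. }
  assert (Hc2 : continuity (fun z => g (clamp a b z) - t)).
  { apply continuity_minus; [apply clamp_cont; [lra|auto] | apply continuity_const; intros ? ?; auto]. }
  destruct (IVT _ x y Hc2 Hxy') as [z [Hz1 Hz2]].
  { rewrite clamp_id; lra. }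
  { rewrite clamp_id; lra. }
  exists z; split; auto. rewrite clamp_id in Hz2; lra.
Qed.

Lemma crra_pos th w : th < 1 -> 0 < w -> crra th w = Rpower w (1 - th) / (1 - th).
Proof. intros; unfold crra; destruct Rlt_dec; [auto|lra]. Qed.
Lemma crra_pos' th w : th < 1 -> 0 < w -> 0 < crra th w.
Proof. intros; rewrite crra_pos; auto. apply Rdiv_lt_0_compat; [apply exp_pos|lra]. Qed.
Lemma crra_neg th w : th < 1 -> w < 0 -> crra th w < 0.
Proof. intros; unfold crra; destruct Rlt_dec; [lra|]. destruct Rlt_dec; [|lra].
  assert (0 < Rpower (- w) (1 - th) / (1 - th)) by (apply Rdiv_lt_0_compat; [apply exp_pos|lra]). lra. Qed.
Lemma crra_0 th : crra th 0 = 0.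
Proof. unfold crra; repeat destruct Rlt_dec; lra. Qed.

Section S.
Variables (vl vh : R) (F0 D : R -> R) (th : R).
Hypothesis MS : model_structure vl vh F0 D th.

Lemma vl_lt : vl < vh. Proof. destruct MS as [[? _] _]; auto. Qed.
Lemma F0_vl : F0 vl = 0. Proof. destruct MS as [[_ [H _]] _]; apply H; lra. Qed.
Lemma F0_vh : F0 vh = 1. Proof. destruct MS as [[_ [_ [H _]]] _]; apply H; lra. Qed.
Lemma F0_inc : strict_incr_on vl vh F0. Proof. destruct MS as [[_ [_ [_ [H _]]]] _]; auto. Qed.
Lemma D_inc : strict_incr_on 0 1 D. Proof. destruct MS as [_ [[H _] _]]; auto. Qed.
Lemma D0 : D 0 = 0. Proof. destruct MS as [_ [[_ [H _]] _]]; auto. Qed.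
Lemma D1 : D 1 = 1. Proof. destruct MS as [_ [[_ [_ [H _]]] _]]; auto. Qed.
Lemma th_rng : 0 <= th < 1. Proof. destruct MS as [_ [_ H]]; auto. Qed.

Lemma F0_pos x : vl < x <= vh -> 0 < F0 x <= 1.
Proof.
  intros Hx. pose proof vl_lt. pose proof F0_vl. pose proof F0_vh. split.
  - assert (F0 vl < F0 x) by (apply F0_inc; lra). lra.
  - destruct (Req_dec x vh) as [->|]; [lra|].
    assert (F0 x < F0 vh) by (apply F0_inc; lra). lra.
Qed.
Lemma F0_lt1 x : vl <= x < vh -> 0 <= F0 x < 1.
Proof.
  intros Hx. pose proof vl_lt. pose proof F0_vl. pose proof F0_vh. split.
  - destruct (Req_dec x vl) as [->|]; [lra|].
    assert (F0 vl < F0 x) by (apply F0_inc; lra). lra.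
  - assert (F0 x < F0 vh) by (apply F0_inc; lra). lra.
Qed.
Lemma DF0_pos x : vl < x <= vh -> 0 < D (F0 x).
Proof.
  intros Hx. pose proof D0. destruct (F0_pos x Hx).
  assert (D 0 < D (F0 x)) by (apply D_inc; lra). lra.
Qed.
Lemma D_le1 q : 0 <= q <= 1 -> 0 <= D q <= 1.
Proof.
  intros Hq. pose proof D_inc. pose proof D0. pose proof D1.
  destruct (Req_dec q 0) as [->|]; [lra|]. destruct (Req_dec q 1) as [->|]; [lra|].
  assert (D 0 < D q) by (apply D_inc; lra). assert (D q < D 1) by (apply D_inc; lra). lra.
Qed.

Variable n : nat.
Hypothesis Hn : (2 <= n)%nat.
Variable beta : R -> R.
Hypothesis EQ : sym_equilibrium n vl vh F0 D th beta.

Lemma beta_inc : strict_incr_on vl vh beta. Proof. destruct EQ as [H _]; auto. Qed.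
Lemma beta_cont : cont_on vl vh beta.
Proof. destruct EQ as [_ [[b' H] _]]. eapply deriv_cont; eauto. Qed.

Lemma pow_pos' x : 0 < x -> 0 < x ^ (n - 1).
Proof. intros; apply pow_lt; auto. Qed.
Lemma pow_zero : 0 ^ (n - 1) = 0.
Proof. apply pow_i; lia. Qed.

Lemma beta_le v : vl < v <= vh -> beta v <= v.
Proof.
  intros Hv. destruct EQ as [_ [_ Hopt]]. pose proof vl_lt. pose proof th_rng.
  specialize (Hopt v vl ltac:(lra) ltac:(lra)).
  rewrite F0_vl, D0, pow_zero, Rmult_0_r in Hopt.
  destruct (Rle_dec (beta v) v) as [|Hc]; auto. exfalso.
  assert (crra th (v - beta v) < 0) by (apply crra_neg; lra).
  assert (0 < D (F0 v) ^ (n - 1)) by (apply pow_pos', DF0_pos; lra).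
  assert (crra th (v - beta v) * D (F0 v) ^ (n - 1) < 0) by (apply Rmult_neg_pos; auto).
  lra.
Qed.

Lemma beta_lt v : vl < v <= vh -> beta v < v.
Proof.
  intros Hv. destruct (Rle_lt_or_eq_dec _ _ (beta_le v Hv)) as [|E]; auto. exfalso.
  destruct EQ as [_ [_ Hopt]]. pose proof th_rng.
  set (m := (vl + v) / 2).
  specialize (Hopt v m ltac:(lra) ltac:(unfold m; lra)).
  rewrite E in Hopt. replace (v - v) with 0 in Hopt by ring. rewrite crra_0, Rmult_0_l in Hopt.
  assert (beta m < beta v) by (apply beta_inc; unfold m; lra).
  assert (0 < crra th (v - beta m)) by (apply crra_pos'; lra).
  assert (0 < D (F0 m) ^ (n - 1)) by (apply pow_pos', DF0_pos; unfold m; lra).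
  assert (0 < crra th (v - beta m) * D (F0 m) ^ (n - 1)) by (apply Rmult_lt_0_compat; auto).
  lra.
Qed.

Lemma beta_ge_vl x : vl < x <= vh -> vl <= beta x.
Proof.
  intros Hx. destruct EQ as [_ [_ Hopt]]. pose proof vl_lt. pose proof th_rng.
  specialize (Hopt vl x ltac:(lra) ltac:(lra)).
  rewrite F0_vl, D0, pow_zero, Rmult_0_r in Hopt.
  destruct (Rle_dec vl (beta x)) as [|Hc]; auto. exfalso.
  assert (0 < crra th (vl - beta x)) by (apply crra_pos'; lra).
  assert (0 < D (F0 x) ^ (n - 1)) by (apply pow_pos', DF0_pos; lra).
  assert (0 < crra th (vl - beta x) * D (F0 x) ^ (n - 1)) by (apply Rmult_lt_0_compat; auto).
  lra.
Qed.

Lemma beta_vl : beta vl = vl.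
Proof.
  pose proof vl_lt. apply Rle_antisym.
  - destruct (Rle_dec (beta vl) vl) as [|Hc]; auto. exfalso.
    set (x := Rmin vh ((vl + beta vl) / 2)).
    assert (Hx : vl < x <= vh) by (unfold x, Rmin; destruct Rle_dec; lra).
    assert (beta vl < beta x) by (apply beta_inc; lra).
    assert (beta x < x) by (apply beta_lt; auto).
    assert (x <= (vl + beta vl) / 2) by apply Rmin_r. lra.
  - destruct (Rle_dec vl (beta vl)) as [|Hc]; auto. exfalso.
    destruct (proj1 (lim_unf _ _ _ _) (beta_cont vl ltac:(lra)) (vl - beta vl) ltac:(lra)) as [alp [Ha Hb]].
    set (x := Rmin vh (vl + alp / 2)).
    assert (Hx : vl < x <= vh) by (unfold x, Rmin; destruct Rle_dec; lra).
    assert (x <= vl + alp/2) by apply Rmin_r.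
    specialize (Hb x ltac:(lra) ltac:(rewrite Rabs_right; lra)).
    assert (vl <= beta x) by (apply beta_ge_vl; auto).
    apply Rabs_def2 in Hb. lra.
Qed.
End S.

Lemma dpl_ext f g x l : (forall y, f y = g y) -> derivable_pt_lim f x l -> derivable_pt_lim g x l.
Proof.
  intros E H eps He. destruct (H eps He) as [d Hd]. exists d. intros h Hh Hl.
  rewrite <- !E. auto.
Qed.

Lemma cont_from_dpl f x l : derivable_pt_lim f x l -> forall eps, 0 < eps ->
  exists d, 0 < d /\ forall y, Rabs (y - x) < d -> Rabs (f y - f x) < eps.
Proof.
  intros H eps He.
  assert (Hc : continuity_pt f x) by (apply derivable_continuous_pt; exists l; auto).
  destruct (proj1 (lim_unf _ _ _ _) Hc eps He) as [alp [Ha Hb]].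
  exists alp; split; auto. intros y Hy.
  destruct (Req_dec y x) as [->|Hne].
  { replace (f x - f x) with 0 by ring; rewrite Rabs_R0; lra. }
  apply Hb; auto. split; [exact I| auto].
Qed.

Section FOC.
Variables (vl vh : R) (F0 D : R -> R) (th : R).
Hypothesis MS : model_structure vl vh F0 D th.
Variable n : nat.
Hypothesis Hn : (2 <= n)%nat.
Variable beta : R -> R.
Hypothesis EQ : sym_equilibrium n vl vh F0 D th beta.
Variables (b' f0 dD : R -> R).
Hypothesis Hb' : deriv_on vl vh beta b'.
Hypothesis Hf0 : deriv_on vl vh F0 f0.
Hypothesis HdD : deriv_on 0 1 D dD.

Lemma FOC v : vl < v < vh ->
  (1 - th) * b' v * D (F0 v) = INR (n - 1) * (v - beta v) * dD (F0 v) * f0 v.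
Proof.
  intros Hv. pose proof (th_rng _ _ _ _ _ MS) as Hth.
  set (c := 1 - th).
  assert (Hb := deriv_interior _ _ _ _ v Hb' Hv).
  assert (HF := deriv_interior _ _ _ _ v Hf0 Hv).
  assert (Hq : 0 < F0 v < 1).
  { destruct (F0_pos _ _ _ _ _ MS v ltac:(lra)). destruct (F0_lt1 _ _ _ _ _ MS v ltac:(lra)). lra. }
  assert (HD := deriv_interior _ _ _ _ (F0 v) HdD Hq).
  assert (Hw : 0 < v - beta v) by (pose proof (beta_lt _ _ _ _ _ MS n Hn beta EQ v ltac:(lra)); lra).
  set (w0 := v - beta v) in *.
  set (phi := fun x => Rpower (v - beta x) c * (D (F0 x)) ^ (n - 1)).
  set (l := c * Rpower w0 (c - 1) * (0 - b' v) * (D (F0 v)) ^ (n - 1) +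
            Rpower w0 c * (INR (n - 1) * (D (F0 v)) ^ Init.Nat.pred (n - 1) * (dD (F0 v) * f0 v))).
  assert (Hphi : derivable_pt_lim phi v l).
  { assert (H1 : derivable_pt_lim (comp (fun y => Rpower y c) (fun x => v - beta x)) v
                    (c * Rpower (v - beta v) (c - 1) * (0 - b' v))).
    { apply derivable_pt_lim_comp.
      + apply dpl_ext with (f := minus_fct (fct_cte v) beta).
        { intros; reflexivity. }
        apply derivable_pt_lim_minus; [apply derivable_pt_lim_const| auto].
      + apply derivable_pt_lim_power; auto. }
    assert (H2 : derivable_pt_lim (comp (fun y => y ^ (n - 1)) (comp D F0)) v
                  (INR (n - 1) * D (F0 v) ^ Init.Nat.pred (n - 1) * (dD (F0 v) * f0 v))).
    { apply derivable_pt_lim_comp.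
      + apply derivable_pt_lim_comp; auto.
      + apply derivable_pt_lim_pow. }
    pose proof (derivable_pt_lim_mult _ _ _ _ _ H1 H2) as H3.
    apply dpl_ext with (f := mult_fct (comp (fun y => Rpower y c) (fun x => v - beta x))
                               (comp (fun y => y ^ (n - 1)) (comp D F0))).
    { intros y; unfold phi, comp, mult_fct; reflexivity. }
    unfold l. exact H3. }
  assert (Hl0 : l = 0).
  { destruct (cont_from_dpl _ _ _ Hb w0 Hw) as [d [Hd Hd2]].
    set (d' := Rmin d (Rmin (v - vl) (vh - v))).
    assert (Hd' : 0 < d') by (unfold d'; repeat apply Rmin_pos; lra).
    assert (H1 := Rmin_l d (Rmin (v - vl) (vh - v))).
    assert (H2 := Rmin_l (v - vl) (vh - v)).
    assert (H3 := Rmin_r (v - vl) (vh - v)).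
    assert (H4 := Rmin_r d (Rmin (v - vl) (vh - v))).
    fold d' in H1, H4.
    change l with (derive_pt phi v (exist _ l Hphi)).
    apply deriv_maximum with (v - d') (v + d'); try lra.
    intros x Hx1 Hx2.
    assert (Hbx : Rabs (beta x - beta v) < w0) by (apply Hd2; apply Rabs_def1; lra).
    apply Rabs_def2 in Hbx. unfold w0 in Hbx.
    destruct EQ as [_ [_ Hopt]].
    specialize (Hopt v x ltac:(lra) ltac:(lra)).
    rewrite !crra_pos in Hopt by lra. fold c in Hopt.
    unfold phi. fold w0.
    assert (0 < c) by (unfold c; lra).
    unfold Rdiv in Hopt.
    apply Rmult_le_reg_r with (/ c). { apply Rinv_0_lt_compat; auto. }
    fold w0 in Hopt. nra. }
  assert (HP : Rpower w0 c = Rpower w0 (c - 1) * w0).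
  { rewrite <- (Rpower_1 w0) at 3 by auto. rewrite <- Rpower_plus. f_equal; ring. }
  assert (HQ : 0 < Rpower w0 (c - 1)) by apply exp_pos.
  assert (Hd0 : 0 < D (F0 v)) by (apply (DF0_pos _ _ _ _ _ MS); lra).
  assert (Hk : (n - 1 = S (Init.Nat.pred (n - 1)))%nat) by lia.
  assert (Hdk : 0 < D (F0 v) ^ Init.Nat.pred (n - 1)) by (apply pow_lt; auto).
  unfold l in Hl0. rewrite HP in Hl0. rewrite Hk in Hl0. simpl pow in Hl0.
  rewrite <- Hk in Hl0.
  apply Rmult_eq_reg_l with (Rpower w0 (c - 1) * D (F0 v) ^ Init.Nat.pred (n - 1)).
  2: { apply Rgt_not_eq. apply Rmult_lt_0_compat; auto. }
  fold c. fold w0. nra.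
Qed.
End FOC.

Lemma Rpower_le1 d a : 0 < d <= 1 -> 0 < a -> 0 < Rpower d a <= 1.
Proof.
  intros Hd Ha. split; [apply exp_pos|]. unfold Rpower. rewrite <- exp_0.
  assert (ln d <= 0).
  { destruct (Req_dec d 1) as [->|]. rewrite ln_1; lra.
    rewrite <- ln_1. left; apply ln_increasing; lra. }
  destruct (Req_dec (a * ln d) 0) as [->|]; [lra|].
  left; apply exp_increasing. nra.
Qed.

Section ORD.
Variables (vl vh : R) (F0 D : R -> R) (th : R).
Hypothesis MS : model_structure vl vh F0 D th.
Variables n1 n2 : nat.
Hypothesis Hn1 : (2 <= n1)%nat.
Hypothesis Hn12 : (n1 < n2)%nat.
Variables beta1 beta2 : R -> R.
Hypothesis EQ1 : sym_equilibrium n1 vl vh F0 D th beta1.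
Hypothesis EQ2 : sym_equilibrium n2 vl vh F0 D th beta2.
Variables (b1' b2' f0 dD : R -> R).
Hypothesis Hb1 : deriv_on vl vh beta1 b1'.
Hypothesis Hb2 : deriv_on vl vh beta2 b2'.
Hypothesis Hf0 : deriv_on vl vh F0 f0.
Hypothesis Hf0p : forall x, vl <= x <= vh -> 0 < f0 x.
Hypothesis HdD : deriv_on 0 1 D dD.
Hypothesis HdDp : forall g, 0 <= g <= 1 -> 0 < dD g.

Let c := 1 - th.
Let k1 := INR (n1 - 1).
Let k2 := INR (n2 - 1).
Let a2 := k2 / c.
Let g x := (beta2 x - beta1 x) * Rpower (D (F0 x)) a2.
Let gp x := (b2' x - b1' x) * Rpower (D (F0 x)) a2 +
            (beta2 x - beta1 x) * (a2 * Rpower (D (F0 x)) (a2 - 1) * (dD (F0 x) * f0 x)).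

Lemma Hn2 : (2 <= n2)%nat. Proof. lia. Qed.

Lemma k12 : 0 < k1 < k2.
Proof. unfold k1, k2. split. apply lt_0_INR; lia. apply lt_INR; lia. Qed.

Lemma g_der x : vl < x < vh -> derivable_pt_lim g x (gp x).
Proof.
  intros Hx.
  assert (Hq : 0 < F0 x < 1).
  { destruct (F0_pos _ _ _ _ _ MS x ltac:(lra)). destruct (F0_lt1 _ _ _ _ _ MS x ltac:(lra)). lra. }
  assert (Hd : 0 < D (F0 x)) by (apply (DF0_pos _ _ _ _ _ MS); lra).
  assert (H1 : derivable_pt_lim (minus_fct beta2 beta1) x (b2' x - b1' x)).
  { apply derivable_pt_lim_minus; eapply deriv_interior; eauto. }
  assert (H2 : derivable_pt_lim (comp (fun y => Rpower y a2) (comp D F0)) x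
     (a2 * Rpower (D (F0 x)) (a2 - 1) * (dD (F0 x) * f0 x))).
  { apply derivable_pt_lim_comp.
    - apply derivable_pt_lim_comp; eapply deriv_interior; eauto.
    - apply derivable_pt_lim_power; auto. }
  pose proof (derivable_pt_lim_mult _ _ _ _ _ H1 H2) as H3.
  apply dpl_ext with (f := mult_fct (minus_fct beta2 beta1) (comp (fun y => Rpower y a2) (comp D F0))).
  { intros; reflexivity. }
  exact H3.
Qed.

Lemma gp_pos x : vl < x < vh -> 0 < gp x.
Proof.
  intros Hx. pose proof (th_rng _ _ _ _ _ MS). pose proof k12.
  assert (Hc : 0 < c) by (unfold c; lra).
  assert (Hd : 0 < D (F0 x)) by (apply (DF0_pos _ _ _ _ _ MS); lra).
  assert (Hq : 0 < F0 x < 1).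
  { destruct (F0_pos _ _ _ _ _ MS x ltac:(lra)). destruct (F0_lt1 _ _ _ _ _ MS x ltac:(lra)). lra. }
  assert (Hp : 0 < dD (F0 x) * f0 x).
  { apply Rmult_lt_0_compat; [apply HdDp; lra| apply Hf0p; lra]. }
  assert (E1 := FOC _ _ _ _ _ MS n1 Hn1 beta1 EQ1 _ _ _ Hb1 Hf0 HdD x Hx).
  assert (E2 := FOC _ _ _ _ _ MS n2 Hn2 beta2 EQ2 _ _ _ Hb2 Hf0 HdD x Hx).
  fold c in E1, E2. fold k1 in E1. fold k2 in E2.
  assert (Hl1 : x - beta1 x > 0) by (pose proof (beta_lt _ _ _ _ _ MS n1 Hn1 beta1 EQ1 x ltac:(lra)); lra).
  set (d := D (F0 x)) in *. set (p := dD (F0 x) * f0 x) in *.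
  set (Q := Rpower d (a2 - 1)).
  assert (HR : Rpower d a2 = Q * d).
  { unfold Q. rewrite <- (Rpower_1 d) at 3 by auto. rewrite <- Rpower_plus. f_equal; ring. }
  assert (HQ : 0 < Q) by apply exp_pos.
  assert (Key : c * d * gp x = Q * d * (k2 - k1) * (x - beta1 x) * p).
  { unfold gp. fold d p. fold Q. rewrite HR. unfold a2.
    transitivity (Q * d * (c * b2' x * d - c * b1' x * d) + (beta2 x - beta1 x) * k2 * Q * d * p).
    { assert (c <> 0) by lra. clearbody d p Q. unfold Rdiv. field. auto. }
    rewrite E1, E2. unfold p. ring. }
  apply Rmult_lt_reg_l with (c * d). { apply Rmult_lt_0_compat; auto. }
  rewrite Rmult_0_r, Key.
  assert (0 < k2 - k1) by lra. repeat apply Rmult_lt_0_compat; auto; try (apply HdDp; lra); try (apply Hf0p; lra).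
Qed.

Lemma g_incr x y : vl < x -> x < y -> y < vh -> g x < g y.
Proof.
  intros. destruct (MVT_cor2 g gp x y ltac:(lra)) as [z [Hz1 Hz2]].
  { intros; apply g_der; lra. }
  assert (0 < gp z) by (apply gp_pos; lra). nra.
Qed.

Lemma beta_order v : vl < v < vh -> beta1 v < beta2 v.
Proof.
  intros Hv. pose proof (th_rng _ _ _ _ _ MS). pose proof k12.
  assert (Hc : 0 < c) by (unfold c; lra).
  set (m := (vl + v) / 2).
  assert (Hgm : 0 <= g m).
  { destruct (Rle_dec 0 (g m)) as [|Hn]; auto. exfalso.
    set (e := - g m / 2).
    assert (He : 0 < e) by (unfold e; lra).
    pose proof (beta_vl _ _ _ _ _ MS n1 Hn1 beta1 EQ1) as V1.
    pose proof (beta_vl _ _ _ _ _ MS n2 Hn2 beta2 EQ2) as V2.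
    pose proof (vl_lt _ _ _ _ _ MS).
    destruct (proj1 (lim_unf _ _ _ _) (beta_cont _ _ _ _ _ n1 beta1 EQ1 vl ltac:(lra)) e He) as [a1 [Ha1 Hc1]].
    destruct (proj1 (lim_unf _ _ _ _) (beta_cont _ _ _ _ _ n2 beta2 EQ2 vl ltac:(lra)) e He) as [a2' [Ha2 Hc2]].
    set (u := vl + Rmin (Rmin a1 a2') (v - vl) / 4).
    assert (Hmin := Rmin_l (Rmin a1 a2') (v - vl)).
    assert (Hmin2 := Rmin_r (Rmin a1 a2') (v - vl)).
    assert (Hmin3 := Rmin_l a1 a2'). assert (Hmin4 := Rmin_r a1 a2').
    assert (Hpos : 0 < Rmin (Rmin a1 a2') (v - vl)) by (repeat apply Rmin_pos; lra).
    assert (Hu : vl < u < m) by (unfold u, m; lra). assert (Hmv : m < v) by (unfold m; lra).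
    specialize (Hc1 u ltac:(lra) ltac:(rewrite Rabs_right; unfold u; lra)).
    specialize (Hc2 u ltac:(lra) ltac:(rewrite Rabs_right; unfold u; lra)).
    rewrite V1 in Hc1. rewrite V2 in Hc2.
    apply Rabs_def2 in Hc1. apply Rabs_def2 in Hc2.
    assert (Hgu : g u < g m) by (apply g_incr; unfold m in *; lra).
    assert (HR := Rpower_le1 (D (F0 u)) a2).
    assert (Hd : 0 < D (F0 u) <= 1).
    { split. apply (DF0_pos _ _ _ _ _ MS); lra.
      apply (D_le1 _ _ _ _ _ MS). destruct (F0_pos _ _ _ _ _ MS u ltac:(lra)); lra. }
    assert (Ha : 0 < a2) by (unfold a2; apply Rdiv_lt_0_compat; lra).
    specialize (HR Hd Ha).
    assert (Hgm0 : g m < 0) by lra.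
    set (gm := g m) in *. unfold e in *.
    unfold g in Hgu. set (R0 := Rpower (D (F0 u)) a2) in *.
    destruct (Rle_dec 0 (beta2 u - beta1 u)).
    - assert (0 <= (beta2 u - beta1 u) * R0) by (apply Rmult_le_pos; lra). lra.
    - apply Rnot_le_lt in n. assert ((beta2 u - beta1 u) <= (beta2 u - beta1 u) * R0) by nra. lra. }
  assert (g m < g v) by (apply g_incr; unfold m; lra).
  assert (0 < g v) by lra. unfold g in *.
  assert (0 < Rpower (D (F0 v)) a2) by apply exp_pos.
  nra.
Qed.
End ORD.

Section BID.
Variables (vl vh : R) (F0 D : R -> R) (th : R).
Hypothesis MS : model_structure vl vh F0 D th.
Variable n : nat.
Variables beta G : R -> R.
Hypothesis EQ : sym_equilibrium n vl vh F0 D th beta.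
Hypothesis BC : bid_cdf vl vh F0 beta G.

Lemma G_at u : vl <= u <= vh -> G (beta u) = F0 u.
Proof.
  intros Hu. destruct BC as [_ H]. apply (H (beta u) u Hu); [lra|].
  intros w Hw. apply (beta_inc _ _ _ _ _ _ _ EQ); lra.
Qed.

Lemma Lge z b : vl <= z <= vh -> beta z <= b -> F0 z <= G b.
Proof.
  intros Hz Hb. pose proof (vl_lt _ _ _ _ _ MS) as Hvv.
  destruct (Rle_dec (beta vh) b) as [Hh|Hh].
  - destruct BC as [_ H]. rewrite (H b vh) by (lra || (intros; lra)).
    destruct (Req_dec z vl) as [->|].
    + rewrite (F0_vl _ _ _ _ _ MS), (F0_vh _ _ _ _ _ MS); lra.
    + destruct (F0_pos _ _ _ _ _ MS z ltac:(lra)). rewrite (F0_vh _ _ _ _ _ MS); lra.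
  - apply Rnot_le_lt in Hh.
    destruct (IVT' vl vh beta z vh b (beta_cont _ _ _ _ _ _ _ EQ)) as [u [Hu Hu2]]; try lra.
    rewrite <- Hu2, G_at by lra.
    destruct (Req_dec z u) as [->|]; [lra|]. left; apply (F0_inc _ _ _ _ _ MS); lra.
Qed.

Lemma Llt z b : vl < z <= vh -> b < beta z -> G b < F0 z.
Proof.
  intros Hz Hb. pose proof (vl_lt _ _ _ _ _ MS) as Hvv.
  destruct (Rlt_dec b (beta vl)) as [Hl|Hl].
  - destruct BC as [H _]. rewrite H by auto. apply (F0_pos _ _ _ _ _ MS); auto.
  - apply Rnot_lt_le in Hl.
    destruct (IVT' vl vh beta vl z b (beta_cont _ _ _ _ _ _ _ EQ)) as [u [Hu Hu2]]; try lra.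
    rewrite <- Hu2, G_at by lra.
    destruct (Req_dec z u) as [->|]; [lra|]. apply (F0_inc _ _ _ _ _ MS); lra.
Qed.
End BID.

Lemma matching vl vh F0 D th vl' vh' F0' D' th' n beta beta' G :
  model_structure vl vh F0 D th -> model_structure vl' vh' F0' D' th' ->
  sym_equilibrium n vl vh F0 D th beta -> sym_equilibrium n vl' vh' F0' D' th' beta' ->
  bid_cdf vl vh F0 beta G -> bid_cdf vl' vh' F0' beta' G ->
  forall y z, vl < y <= vh -> vl' < z <= vh' -> F0 y = F0' z -> beta y = beta' z.
Proof.
  intros M M' E E' B B' y z Hy Hz Hq.
  destruct (Rtotal_order (beta y) (beta' z)) as [H|[H|H]]; auto; exfalso.
  - set (b := (beta y + beta' z) / 2).
    assert (H1 := Lge _ _ _ _ _ M _ _ _ E B y b ltac:(lra) ltac:(unfold b; lra)).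
    assert (H2 := Llt _ _ _ _ _ M' _ _ _ E' B' z b Hz ltac:(unfold b; lra)). lra.
  - set (b := (beta y + beta' z) / 2).
    assert (H1 := Lge _ _ _ _ _ M' _ _ _ E' B' z b ltac:(lra) ltac:(unfold b; lra)).
    assert (H2 := Llt _ _ _ _ _ M _ _ _ E B y b Hy ltac:(unfold b; lra)). lra.
Qed.

Lemma dpl_lim f x l : derivable_pt_lim f x l ->
  limit1_in (fun y => (f y - f x) / (y - x)) (fun y => y <> x) l x.
Proof.
  intros H. apply lim_unf. intros eps He. destruct (H eps He) as [d Hd].
  exists d; split; [apply cond_pos|]. intros y Hy Hl.
  specialize (Hd (y - x) ltac:(lra) Hl). replace (x + (y - x)) with y in Hd by ring. auto.
Qed.

Lemma ratio_lim f g x lf lg : derivable_pt_lim f x lf -> derivable_pt_lim g x lg -> lg <> 0 ->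
  forall eps, 0 < eps -> exists d, 0 < d /\ forall y, y <> x -> Rabs (y - x) < d ->
    Rabs ((f y - f x) / (g y - g x) - lf / lg) < eps.
Proof.
  intros Hf Hg Hl eps He.
  assert (L := limit_mul _ _ _ _ _ _ (dpl_lim _ _ _ Hf) (limit_inv _ _ _ _ (dpl_lim _ _ _ Hg) Hl)).
  destruct (proj1 (lim_unf _ _ _ _) L eps He) as [d [Hd Hd2]].
  exists d; split; auto. intros y Hy Hyl. specialize (Hd2 y Hy Hyl).
  replace ((f y - f x) / (g y - g x)) with ((f y - f x) / (y - x) * / ((g y - g x) / (y - x))).
  { auto. }
  destruct (Req_dec (g y - g x) 0) as [E|E].
  - rewrite E. unfold Rdiv. rewrite Rmult_0_l, Rinv_0. ring.
  - field. split; auto. lra.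
Qed.

Lemma Q_eq vl vh F0 D th vl' vh' F0' D' th' n beta beta' G b f0 b2 f0' :
  model_structure vl vh F0 D th -> model_structure vl' vh' F0' D' th' ->
  sym_equilibrium n vl vh F0 D th beta -> sym_equilibrium n vl' vh' F0' D' th' beta' ->
  bid_cdf vl vh F0 beta G -> bid_cdf vl' vh' F0' beta' G ->
  deriv_on vl vh beta b -> deriv_on vl vh F0 f0 ->
  deriv_on vl' vh' beta' b2 -> deriv_on vl' vh' F0' f0' ->
  forall v w, vl < v < vh -> vl' < w < vh' -> f0 v <> 0 -> f0' w <> 0 -> F0 v = F0' w ->
  b v / f0 v = b2 w / f0' w.
Proof.
  intros M M' E E' B B' Db Df Db2 Df2 v w Hv Hw Hf Hf' Hq.
  set (Q := b v / f0 v). set (Q' := b2 w / f0' w).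
  destruct (Req_dec Q Q') as [|Hne]; auto. exfalso.
  set (eps := Rabs (Q - Q') / 4).
  assert (He : 0 < eps) by (unfold eps; assert (0 < Rabs (Q - Q')) by (apply Rabs_pos_lt; lra); lra).
  destruct (ratio_lim _ _ _ _ _ (deriv_interior _ _ _ _ _ Db Hv) (deriv_interior _ _ _ _ _ Df Hv) Hf eps He)
    as [d1 [Hd1 R1]].
  destruct (ratio_lim _ _ _ _ _ (deriv_interior _ _ _ _ _ Db2 Hw) (deriv_interior _ _ _ _ _ Df2 Hw) Hf' eps He)
    as [d2 [Hd2 R2]].
  set (dd := Rmin d2 (Rmin (w - vl') (vh' - w)) / 2).
  assert (Hdd : 0 < dd) by (unfold dd; assert (0 < Rmin d2 (Rmin (w - vl') (vh' - w))) by (repeat apply Rmin_pos; lra); lra).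
  assert (Hm1 := Rmin_l d2 (Rmin (w - vl') (vh' - w))).
  assert (Hm2 := Rmin_r d2 (Rmin (w - vl') (vh' - w))).
  assert (Hm3 := Rmin_l (w - vl') (vh' - w)). assert (Hm4 := Rmin_r (w - vl') (vh' - w)).
  assert (Hdd2 : dd < d2 /\ dd < w - vl' /\ dd < vh' - w) by (unfold dd; lra).
  set (w1 := w - dd). set (w2 := w + dd).
  assert (Hw1 : F0' w1 < F0' w) by (apply (F0_inc _ _ _ _ _ M'); unfold w1; lra).
  assert (Hw2 : F0' w < F0' w2) by (apply (F0_inc _ _ _ _ _ M'); unfold w2; lra).
  set (e2 := Rmin (F0' w - F0' w1) (F0' w2 - F0' w)).
  assert (He2 : 0 < e2) by (unfold e2; apply Rmin_pos; lra).
  assert (He21 := Rmin_l (F0' w - F0' w1) (F0' w2 - F0' w)).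
  assert (He22 := Rmin_r (F0' w - F0' w1) (F0' w2 - F0' w)).
  destruct (proj1 (lim_unf _ _ _ _) (deriv_cont _ _ _ _ Df v ltac:(lra)) e2 He2) as [d3 [Hd3 C3]].
  set (y := v + Rmin (Rmin d1 d3) (vh - v) / 2).
  assert (Hy0 : 0 < Rmin (Rmin d1 d3) (vh - v)) by (repeat apply Rmin_pos; lra).
  assert (Hy1 := Rmin_l (Rmin d1 d3) (vh - v)). assert (Hy2 := Rmin_r (Rmin d1 d3) (vh - v)).
  assert (Hy3 := Rmin_l d1 d3). assert (Hy4 := Rmin_r d1 d3).
  assert (Hy : v < y < vh) by (unfold y; lra).
  assert (Hyv : Rabs (y - v) < Rmin (Rmin d1 d3) (vh - v)) by (rewrite Rabs_right; unfold y; lra).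
  specialize (C3 y ltac:(lra) ltac:(lra)). apply Rabs_def2 in C3.
  unfold e2 in C3.
  destruct (IVT' vl' vh' F0' w1 w2 (F0 y) (deriv_cont _ _ _ _ Df2)) as [z [Hz Hz2]];
    try lra; try (unfold w1, w2; lra).
  assert (Hz3 : z <> w).
  { intros Hzw. rewrite Hzw in Hz2. assert (F0 v < F0 y) by (apply (F0_inc _ _ _ _ _ M); lra). lra. }
  assert (Hzr : Rabs (z - w) < d2) by (apply Rabs_def1; unfold w1, w2 in Hz; lra).
  specialize (R1 y ltac:(lra) ltac:(lra)). specialize (R2 z Hz3 Hzr).
  assert (My := matching _ _ _ _ _ _ _ _ _ _ _ _ _ _ M M' E E' B B' y z ltac:(lra) ltac:(unfold w1,w2 in Hz; lra) (eq_sym Hz2)).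
  assert (Mv := matching _ _ _ _ _ _ _ _ _ _ _ _ _ _ M M' E E' B B' v w ltac:(lra) ltac:(lra) Hq).
  rewrite My, Mv, <- Hz2, Hq in R1. fold Q in R1. fold Q' in R2.
  apply Rabs_def2 in R1. apply Rabs_def2 in R2.
  unfold eps in *. revert R1 R2. unfold Rabs at 1 2 3 4; repeat destruct Rcase_abs; intros; lra.
Qed.

Lemma alg c c' d e dD dE K P f f' v w b :
 f <> 0 -> f' <> 0 -> 0 < K ->
 c * (P * f) * d = K * (v - b) * dD * f ->
 c' * (P * f') * e = K * (w - b) * dE * f' ->
 c' * e * dD * (v - b) = c * d * dE * (w - b).
Proof.
  intros Hf Hf' HK A1 A2.
  assert (B1 : c * P * d = K * (v - b) * dD).
  { apply Rmult_eq_reg_r with f; auto. rewrite <- A1. ring. }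
  assert (B2 : c' * P * e = K * (w - b) * dE).
  { apply Rmult_eq_reg_r with f'; auto. rewrite <- A2. ring. }
  apply Rmult_eq_reg_l with K; [|lra].
  transitivity (c' * e * (K * (v - b) * dD)); [ring|].
  rewrite <- B1.
  transitivity (c * d * (c' * P * e)); [ring|].
  rewrite B2. ring.
Qed.

Lemma interior_id n1 n2 vl vh F0 D th vl' vh' F0' D' th' beta1 beta2 beta1' beta2' G1 G2
  f0 f0' dD dE :
  (2 <= n1)%nat -> (n1 < n2)%nat ->
  model_structure vl vh F0 D th -> model_structure vl' vh' F0' D' th' ->
  sym_equilibrium n1 vl vh F0 D th beta1 -> sym_equilibrium n2 vl vh F0 D th beta2 ->
  sym_equilibrium n1 vl' vh' F0' D' th' beta1' -> sym_equilibrium n2 vl' vh' F0' D' th' beta2' ->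
  bid_cdf vl vh F0 beta1 G1 -> bid_cdf vl' vh' F0' beta1' G1 ->
  bid_cdf vl vh F0 beta2 G2 -> bid_cdf vl' vh' F0' beta2' G2 ->
  deriv_on vl vh F0 f0 -> (forall x, vl <= x <= vh -> 0 < f0 x) ->
  deriv_on vl' vh' F0' f0' -> (forall x, vl' <= x <= vh' -> 0 < f0' x) ->
  deriv_on 0 1 D dD -> (forall g, 0 <= g <= 1 -> 0 < dD g) ->
  deriv_on 0 1 D' dE -> (forall g, 0 <= g <= 1 -> 0 < dE g) ->
  forall v, vl < v < vh ->
    (vl' < v < vh') /\ F0' v = F0 v /\
    (1 - th') * D' (F0 v) * dD (F0 v) = (1 - th) * D (F0 v) * dE (F0 v).
Proof.
  intros Hn1 Hn12 M M' E1 E2 E1' E2' B1 B1' B2 B2' Df Hf Df' Hf' DD HD DE HE v Hv.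
  assert (Hn2 : (2 <= n2)%nat) by lia.
  destruct E1 as [I1 [[b1 Db1] O1]] eqn:EE1. destruct E2 as [I2 [[b2 Db2] O2]] eqn:EE2.
  destruct E1' as [I1' [[b1' Db1'] O1']] eqn:EE1'. destruct E2' as [I2' [[b2' Db2'] O2']] eqn:EE2'.
  clear EE1 EE2 EE1' EE2'.
  set (q := F0 v).
  assert (Hq : 0 < q < 1).
  { destruct (F0_pos _ _ _ _ _ M v ltac:(lra)). destruct (F0_lt1 _ _ _ _ _ M v ltac:(lra)). unfold q; lra. }
  pose proof (vl_lt _ _ _ _ _ M') as Hvv'.
  destruct (IVT' vl' vh' F0' vl' vh' q (deriv_cont _ _ _ _ Df')) as [w [Hw Hw2]]; try lra.
  { rewrite (F0_vl _ _ _ _ _ M'); lra. } { rewrite (F0_vh _ _ _ _ _ M'); lra. }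
  assert (Hw3 : vl' < w < vh').
  { split; destruct (Req_dec w vl'); destruct (Req_dec w vh'); subst;
    try rewrite (F0_vl _ _ _ _ _ M') in Hw2; try rewrite (F0_vh _ _ _ _ _ M') in Hw2; lra. }
  assert (Hfv : f0 v <> 0) by (apply Rgt_not_eq, Hf; lra).
  assert (Hfw : f0' w <> 0) by (apply Rgt_not_eq, Hf'; lra).
  assert (Q1 := Q_eq _ _ _ _ _ _ _ _ _ _ _ _ _ _ _ _ _ _ M M' E1 E1' B1 B1' Db1 Df Db1' Df' v w Hv Hw3 Hfv Hfw (eq_sym Hw2)).
  assert (Q2 := Q_eq _ _ _ _ _ _ _ _ _ _ _ _ _ _ _ _ _ _ M M' E2 E2' B2 B2' Db2 Df Db2' Df' v w Hv Hw3 Hfv Hfw (eq_sym Hw2)).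
  assert (F1 := FOC _ _ _ _ _ M n1 Hn1 beta1 E1 _ _ _ Db1 Df DD v Hv).
  assert (F2 := FOC _ _ _ _ _ M n2 Hn2 beta2 E2 _ _ _ Db2 Df DD v Hv).
  assert (F1' := FOC _ _ _ _ _ M' n1 Hn1 beta1' E1' _ _ _ Db1' Df' DE w Hw3).
  assert (F2' := FOC _ _ _ _ _ M' n2 Hn2 beta2' E2' _ _ _ Db2' Df' DE w Hw3).
  assert (Mt1 := matching _ _ _ _ _ _ _ _ _ _ _ _ _ _ M M' E1 E1' B1 B1' v w ltac:(lra) ltac:(lra) (eq_sym Hw2)).
  assert (Mt2 := matching _ _ _ _ _ _ _ _ _ _ _ _ _ _ M M' E2 E2' B2 B2' v w ltac:(lra) ltac:(lra) (eq_sym Hw2)).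
  assert (Ord := beta_order _ _ _ _ _ M n1 n2 Hn1 Hn12 beta1 beta2 E1 E2 _ _ _ _ Db1 Db2 Df Hf DD HD v Hv).
  rewrite <- Mt1, Hw2 in F1'. rewrite <- Mt2, Hw2 in F2'. fold q in F1, F2.
  assert (Hb1 : b1 v = b1 v / f0 v * f0 v) by (field; auto).
  assert (Hb2 : b2 v = b2 v / f0 v * f0 v) by (field; auto).
  assert (Hb1' : b1' w = b1 v / f0 v * f0' w) by (rewrite Q1; field; auto).
  assert (Hb2' : b2' w = b2 v / f0 v * f0' w) by (rewrite Q2; field; auto).
  rewrite Hb1 in F1. rewrite Hb2 in F2. rewrite Hb1' in F1'. rewrite Hb2' in F2'.
  assert (K1 : 0 < INR (n1 - 1)) by (apply lt_0_INR; lia).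
  assert (K2 : 0 < INR (n2 - 1)) by (apply lt_0_INR; lia).
  assert (A1 := alg _ _ _ _ _ _ _ _ _ _ v w (beta1 v) Hfv Hfw K1 F1 F1').
  assert (A2 := alg _ _ _ _ _ _ _ _ _ _ v w (beta2 v) Hfv Hfw K2 F2 F2').
  assert (Hd : 0 < D q) by (apply (DF0_pos _ _ _ _ _ M); lra).
  assert (He : 0 < D' q).
  { pose proof (D0 _ _ _ _ _ M'). assert (D' 0 < D' q) by (apply (D_inc _ _ _ _ _ M'); lra). lra. }
  pose proof (th_rng _ _ _ _ _ M). pose proof (th_rng _ _ _ _ _ M').
  assert (HdDq : 0 < dD q) by (apply HD; lra).
  assert (HdEq : 0 < dE q) by (apply HE; lra).
  set (X := (1 - th) * D q * dE q) in *. set (Y := (1 - th') * D' q * dD q) in *.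
  assert (HX : 0 < X) by (unfold X; repeat apply Rmult_lt_0_compat; lra).
  assert (HXY : X = Y).
  { apply Rmult_eq_reg_r with (beta1 v - beta2 v); [|lra].
    transitivity (X * (w - beta2 v) - X * (w - beta1 v)); [ring|].
    unfold X, Y in *. rewrite <- A1, <- A2. ring. }
  assert (Hvw : v = w).
  { rewrite <- HXY in A1. unfold X in A1. fold X in A1.
    apply Rmult_eq_reg_l in A1; [lra|lra]. }
  subst w. split; [lra|]. split; [auto|]. fold q. unfold X, Y in *. lra.
Qed.

Lemma ln_le' x y : 0 < x -> x <= y -> ln x <= ln y.
Proof. intros. destruct (Req_dec x y) as [->|]; [lra|]. left; apply ln_increasing; lra. Qed.

Lemma no_power A B dA s :
  (forall q, 0 < q < 1 -> 0 < B q <= q) -> (forall q, 0 < q < 1 -> 0 < A q) ->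
  deriv_on 0 1 A dA -> A 0 = 0 -> 0 < dA 0 -> 1 < s ->
  (forall q, 0 < q < 1 -> ln (A q) = s * ln (B q)) -> False.
Proof.
  intros HB HA DA A0 Hd Hs Hrel.
  set (e0 := dA 0).
  destruct (proj1 (lim_unf _ _ _ _) (DA 0 ltac:(lra)) (e0 / 2) ltac:(unfold e0; lra)) as [alp [Ha Hl]].
  set (t := ln (e0 / 2) / (s - 1) - 1).
  set (q := Rmin (Rmin (alp / 2) (1 / 2)) (exp t)).
  assert (Hq1 := Rmin_l (Rmin (alp / 2) (1 / 2)) (exp t)).
  assert (Hq2 := Rmin_r (Rmin (alp / 2) (1 / 2)) (exp t)).
  assert (Hq3 := Rmin_l (alp / 2) (1 / 2)). assert (Hq4 := Rmin_r (alp / 2) (1 / 2)).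
  assert (Hq0 : 0 < q) by (unfold q; repeat apply Rmin_pos; try apply exp_pos; lra).
  fold q in Hq1, Hq2.
  specialize (Hl q ltac:(split; [lra|lra]) ltac:(rewrite Rminus_0_r, Rabs_right; lra)).
  rewrite A0, !Rminus_0_r in Hl. apply Rabs_def2 in Hl.
  assert (HAq : q * (e0 / 2) < A q).
  { fold e0 in Hl. assert (e0 / 2 < A q / q) by lra.
    apply Rmult_lt_compat_l with (r := q) in H; auto.
    replace (q * (A q / q)) with (A q) in H by (field; lra). lra. }
  assert (Hln1 : ln q + ln (e0 / 2) < ln (A q)).
  { rewrite <- ln_mult by (unfold e0; lra). apply ln_increasing; auto.
    apply Rmult_lt_0_compat; unfold e0; lra. }
  rewrite Hrel in Hln1 by lra.
  destruct (HB q ltac:(lra)) as [HB1 HB2].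
  assert (Hln2 : ln (B q) <= ln q) by (apply ln_le'; auto).
  assert (Hln3 : ln q <= t).
  { rewrite <- (ln_exp t). apply ln_le'; auto. }
  assert (Ht : (s - 1) * t = ln (e0 / 2) - (s - 1)) by (unfold t; field; lra).
  assert (s * ln (B q) <= s * ln q) by (apply Rmult_le_compat_l; lra).
  assert ((s - 1) * ln q <= (s - 1) * t) by (apply Rmult_le_compat_l; lra).
  nra.
Qed.

Lemma amb_pos D q : ambiguity_D D -> 0 < q < 1 -> 0 < D q <= q.
Proof.
  intros [Hi [H0 [H1 [Hle _]]]] Hq. split.
  - assert (D 0 < D q) by (apply Hi; lra). lra.
  - apply Hle; lra.
Qed.

Lemma D_id D E dD dE th th' :
  ambiguity_D D -> ambiguity_D E -> deriv_on 0 1 D dD -> deriv_on 0 1 E dE ->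
  0 < dD 0 -> 0 < dE 0 -> 0 <= th < 1 -> 0 <= th' < 1 ->
  (forall q, 0 < q < 1 -> (1 - th') * E q * dD q = (1 - th) * D q * dE q) ->
  th = th' /\ forall g, 0 <= g <= 1 -> D g = E g.
Proof.
  intros AD AE DD DE HD0 HE0 Ht Ht' Rel.
  set (c := 1 - th) in *. set (c' := 1 - th') in *.
  assert (Hc : 0 < c) by (unfold c; lra). assert (Hc' : 0 < c') by (unfold c'; lra).
  set (L := fun q => c * ln (E q) - c' * ln (D q)).
  set (Lp := fun q => c * (/ E q * dE q) - c' * (/ D q * dD q)).
  assert (Lder : forall q, 0 < q < 1 -> derivable_pt_lim L q (Lp q)).
  { intros q Hq. destruct (amb_pos D q AD Hq). destruct (amb_pos E q AE Hq).
    apply dpl_ext with (f := minus_fct (mult_real_fct c (comp ln E)) (mult_real_fct c' (comp ln D))).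
    { intros; reflexivity. }
    apply derivable_pt_lim_minus; apply derivable_pt_lim_scal; apply derivable_pt_lim_comp.
    - apply (deriv_interior _ _ _ _ _ DE); lra.
    - apply derivable_pt_lim_ln; auto.
    - apply (deriv_interior _ _ _ _ _ DD); lra.
    - apply derivable_pt_lim_ln; auto. }
  assert (Lp0 : forall q, 0 < q < 1 -> Lp q = 0).
  { intros q Hq. destruct (amb_pos D q AD Hq). destruct (amb_pos E q AE Hq).
    unfold Lp. specialize (Rel q Hq).
    apply Rmult_eq_reg_l with (E q * D q); [|apply Rgt_not_eq; apply Rmult_lt_0_compat; lra].
    transitivity (c * D q * dE q - c' * E q * dD q); [field; lra|]. lra. }
  assert (Lconst : forall q, 0 < q < 1 -> L q = L (1 / 2)).
  { intros q Hq. destruct (Rtotal_order q (1/2)) as [H|[H|H]].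
    - destruct (MVT_cor2 L Lp q (1/2) H) as [z [Hz1 Hz2]].
      { intros; apply Lder; lra. }
      rewrite Lp0 in Hz1 by lra. lra.
    - subst; auto.
    - destruct (MVT_cor2 L Lp (1/2) q H) as [z [Hz1 Hz2]].
      { intros; apply Lder; lra. }
      rewrite Lp0 in Hz1 by lra. lra. }
  assert (Lhalf : L (1 / 2) = 0).
  { destruct (Req_dec (L (1/2)) 0) as [|Hne]; auto. exfalso.
    set (e := Rabs (L (1/2)) / (2 * (c + c'))).
    assert (He : 0 < e).
    { unfold e. apply Rdiv_lt_0_compat; [apply Rabs_pos_lt; auto| lra]. }
    destruct (cont_from_dpl _ _ _ (derivable_pt_lim_ln 1 ltac:(lra)) e He) as [d [Hd Hln]].
    rewrite ln_1 in Hln.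
    assert (CE := deriv_cont _ _ _ _ DE 1 ltac:(lra)).
    assert (CD := deriv_cont _ _ _ _ DD 1 ltac:(lra)).
    destruct AE as [_ [_ [E1 _]]]. destruct AD as [_ [_ [D1 _]]].
    destruct (proj1 (lim_unf _ _ _ _) CE d Hd) as [a1 [Ha1 H1]].
    destruct (proj1 (lim_unf _ _ _ _) CD d Hd) as [a2 [Ha2 H2]].
    rewrite E1 in H1. rewrite D1 in H2.
    set (q := 1 - Rmin (Rmin a1 a2) (1/2) / 2).
    assert (Hm0 : 0 < Rmin (Rmin a1 a2) (1/2)) by (repeat apply Rmin_pos; lra).
    assert (Hm1 := Rmin_l (Rmin a1 a2) (1/2)). assert (Hm2 := Rmin_r (Rmin a1 a2) (1/2)).
    assert (Hm3 := Rmin_l a1 a2). assert (Hm4 := Rmin_r a1 a2).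
    assert (Hq : 0 < q < 1) by (unfold q; lra).
    assert (Hq1 : Rabs (q - 1) = 1 - q) by (rewrite Rabs_left; unfold q; lra).
    specialize (H1 q ltac:(lra) ltac:(rewrite Hq1; unfold q; lra)).
    specialize (H2 q ltac:(lra) ltac:(rewrite Hq1; unfold q; lra)).
    specialize (Hln (E q) H1) as HlE. specialize (Hln (D q) H2) as HlD.
    rewrite Rminus_0_r in HlE, HlD.
    assert (HLq : c * ln (E q) - c' * ln (D q) = L (1/2)) by exact (Lconst q Hq).
    assert (Habs : Rabs (L (1/2)) <= c * Rabs (ln (E q)) + c' * Rabs (ln (D q))).
    { rewrite <- HLq. unfold Rminus. eapply Rle_trans; [apply Rabs_triang|].
      rewrite Rabs_Ropp, !Rabs_mult, (Rabs_right c), (Rabs_right c') by lra. lra. }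
    assert (c * Rabs (ln (E q)) <= c * e) by (apply Rmult_le_compat_l; lra).
    assert (c' * Rabs (ln (D q)) <= c' * e) by (apply Rmult_le_compat_l; lra).
    assert (HA : 0 < Rabs (L (1/2))) by (apply Rabs_pos_lt; auto).
    assert (He2 : (c + c') * e = Rabs (L (1/2)) / 2) by (unfold e; field; lra).
    nra. }
  assert (Hrel : forall q, 0 < q < 1 -> c * ln (E q) = c' * ln (D q)).
  { intros q Hq. assert (H := Lconst q Hq). rewrite Lhalf in H. unfold L in H. lra. }
  assert (Hcc : c = c').
  { destruct (Rtotal_order c c') as [H|[H|H]]; auto; exfalso.
    - apply (no_power E D dE (c' / c)); auto.
      + intros; apply amb_pos; auto.
      + intros; apply amb_pos; auto.
      + destruct AE as [_ [H0 _]]; auto.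
      + apply Rmult_lt_reg_r with c; auto. unfold Rdiv. rewrite Rmult_assoc, Rinv_l; lra.
      + intros q Hq. apply Rmult_eq_reg_l with c; [|lra]. rewrite Hrel by auto. field. lra.
    - apply (no_power D E dD (c / c')); auto.
      + intros; apply amb_pos; auto.
      + intros; apply amb_pos; auto.
      + destruct AD as [_ [H0 _]]; auto.
      + apply Rmult_lt_reg_r with c'; auto. unfold Rdiv. rewrite Rmult_assoc, Rinv_l; lra.
      + intros q Hq. apply Rmult_eq_reg_l with c'; [|lra]. rewrite <- Hrel by auto. field. lra. }
  split; [unfold c, c' in Hcc; lra|].
  intros g Hg.
  destruct (Req_dec g 0) as [->|H0].
  { destruct AD as [_ [-> _]]. destruct AE as [_ [-> _]]. auto. }
  destruct (Req_dec g 1) as [->|H1].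
  { destruct AD as [_ [_ [-> _]]]. destruct AE as [_ [_ [-> _]]]. auto. }
  assert (Hq : 0 < g < 1) by lra.
  destruct (amb_pos D g AD Hq). destruct (amb_pos E g AE Hq).
  apply ln_inv; auto. specialize (Hrel g Hq). rewrite Hcc in Hrel.
  apply Rmult_eq_reg_l in Hrel; lra.
Qed.

Theorem proposition3 :
  forall (n1 n2 : nat), (2 <= n1)%nat -> (n1 < n2)%nat ->
  forall (vl vh : R) (F0 D : R -> R) (theta : R)
         (vl' vh' : R) (F0' D' : R -> R) (theta' : R)
         (beta1 beta2 beta1' beta2' G1 G2 : R -> R),
    model_structure vl vh F0 D theta ->
    model_structure vl' vh' F0' D' theta' ->
    sym_equilibrium n1 vl vh F0 D theta beta1 ->
    sym_equilibrium n2 vl vh F0 D theta beta2 ->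
    sym_equilibrium n1 vl' vh' F0' D' theta' beta1' ->
    sym_equilibrium n2 vl' vh' F0' D' theta' beta2' ->
    bid_cdf vl vh F0 beta1 G1 -> bid_cdf vl' vh' F0' beta1' G1 ->
    bid_cdf vl vh F0 beta2 G2 -> bid_cdf vl' vh' F0' beta2' G2 ->
    vl = vl' /\ vh = vh' /\ (forall x, F0 x = F0' x) /\
    (forall g, 0 <= g <= 1 -> D g = D' g) /\ theta = theta'.
Proof.
  intros n1 n2 Hn1 Hn12 vl vh F0 D th vl' vh' F0' D' th' b1 b2 b1' b2' G1 G2
    M M' E1 E2 E1' E2' B1 B1' B2 B2'.
  pose proof M as [[Hvl [Hlo [Hhi [Hinc [f0 [[Df0 _] Hf0p]]]]]] [AD Hth]].
  pose proof M' as [[Hvl' [Hlo' [Hhi' [Hinc' [f0' [[Df0' _] Hf0p']]]]]] [AD' Hth']].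
  pose proof AD as [_ [_ [_ [_ [dD [[DdD _] [HdD0 HdDp]]]]]]].
  pose proof AD' as [_ [_ [_ [_ [dE [[DdE _] [HdE0 HdEp]]]]]]].
  assert (Int := interior_id n1 n2 vl vh F0 D th vl' vh' F0' D' th' b1 b2 b1' b2' G1 G2
     f0 f0' dD dE Hn1 Hn12 M M' E1 E2 E1' E2' B1 B1' B2 B2' Df0 Hf0p Df0' Hf0p' DdD HdDp DdE HdEp).
  assert (Int' := interior_id n1 n2 vl' vh' F0' D' th' vl vh F0 D th b1' b2' b1 b2 G1 G2
     f0' f0 dE dD Hn1 Hn12 M' M E1' E2' E1 E2 B1' B1 B2' B2 Df0' Hf0p' Df0 Hf0p DdE HdEp DdD HdDp).
  assert (Hl : vl = vl').
  { destruct (Rtotal_order vl vl') as [H|[H|H]]; auto; exfalso.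
    - set (v := (vl + Rmin vl' vh) / 2).
      assert (Hm1 := Rmin_l vl' vh). assert (Hm2 := Rmin_r vl' vh).
      assert (vl < Rmin vl' vh) by (unfold Rmin; destruct Rle_dec; lra).
      destruct (Int v ltac:(unfold v; lra)) as [Hv _]. unfold v in Hv. lra.
    - set (v := (vl' + Rmin vl vh') / 2).
      assert (Hm1 := Rmin_l vl vh'). assert (Hm2 := Rmin_r vl vh').
      assert (vl' < Rmin vl vh') by (unfold Rmin; destruct Rle_dec; lra).
      destruct (Int' v ltac:(unfold v; lra)) as [Hv _]. unfold v in Hv. lra. }
  assert (Hh : vh = vh').
  { destruct (Rtotal_order vh vh') as [H|[H|H]]; auto; exfalso.
    - set (v := (vh' + Rmax vl' vh) / 2).
      assert (Hm1 := Rmax_l vl' vh). assert (Hm2 := Rmax_r vl' vh).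
      assert (Rmax vl' vh < vh') by (unfold Rmax; destruct Rle_dec; lra).
      destruct (Int' v ltac:(unfold v; lra)) as [Hv _]. unfold v in Hv. lra.
    - set (v := (vh + Rmax vl vh') / 2).
      assert (Hm1 := Rmax_l vl vh'). assert (Hm2 := Rmax_r vl vh').
      assert (Rmax vl vh' < vh) by (unfold Rmax; destruct Rle_dec; lra).
      destruct (Int v ltac:(unfold v; lra)) as [Hv _]. unfold v in Hv. lra. }
  subst vl' vh'.
  assert (HF : forall x, F0 x = F0' x).
  { intros x. destruct (Rle_dec x vl). { rewrite Hlo, Hlo'; auto. }
    destruct (Rle_dec vh x). { rewrite Hhi, Hhi'; auto. }
    destruct (Int x ltac:(lra)) as [_ [H _]]. auto. }
  destruct (D_id D D' dD dE th th' AD AD' DdD DdE HdD0 HdE0 Hth Hth') as [Ht HD].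
  { intros q Hq.
    destruct (IVT' vl vh F0 vl vh q (deriv_cont _ _ _ _ Df0)) as [v [Hv Hv2]]; try lra.
    { rewrite (F0_vl _ _ _ _ _ M); lra. } { rewrite (F0_vh _ _ _ _ _ M); lra. }
    assert (Hv3 : vl < v < vh).
    { split; destruct (Req_dec v vl); destruct (Req_dec v vh); subst;
      try rewrite (F0_vl _ _ _ _ _ M) in Hq; try rewrite (F0_vh _ _ _ _ _ M) in Hq; lra. }
    destruct (Int v Hv3) as [_ [_ H]]. rewrite Hv2 in H. auto. }
  repeat split; auto.
Qed.
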